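(* Let $p\in W^{1,\infty}(\mathbb{R}^+\times\mathbb{R}^+)$ with $p\ge0$, let $\alpha:\mathbb{R}^+\to[0,\infty)$ be bounded and of bounded variation on $\mathbb{R}^+$, and let $(n^0_j)_{j\ge1}$ be nonnegative with $\|n^0\|_1<\infty$, $\|n^0\|_\infty<\infty$ and $TV(n^0)<\infty$. Then there exist $\tau_0>0$ and constants $C_1,C_2>0$, depending only on $p$, $\alpha$, $\|n^0\|_1$ and $\|n^0\|_\infty$, such that whenever $\Delta t\le\tau_0$ and the DDM CFL condition holds, the DDM upwind scheme satisfies for every $m\in\mathbb{N}$, with $T=m\Delta t$, $$TV(n^m)\le e^{C_1T}\,TV(n^0)+C_2\left(e^{C_1T}-1\right).$$
   Context: DDM upwind scheme: fix $\Delta s,\Delta t>0$; $s_j=(j-\tfrac12)\Delta s$, $j\in\{1,2,\dots\}$; $t^m=m\Delta t$; $\alpha_k=\alpha(t^k)$. For sequences, $\|u\|_1=\sum_{j\ge1}\Delta s|u_j|$, $\|u\|_\infty=\sup_j|u_j|$. Set $X^0=0$, $N^0=\sum_{j\ge1}\Delta s\,p(s_j,0)n^0_j$. For $m\ge0$: with $n^m_0:=N^m$, $n^{m+1}_j=n^m_j-\frac{\Delta t}{\Delta s}(n^m_j-n^m_{j-1})-\Delta t\,p(s_j,X^m)n^m_j$ for $j\ge1$; then $X^{m+1}\ge0$ is the (unique under the CFL condition) solution of $X^{m+1}=\frac{\Delta t}{2}\Big(\alpha_0\sum_{j\ge1}\Delta s\,p(s_j,X^{m+1})n^{m+1}_j+\sum_{k=0}^mN^k\alpha_{m+1-k}\Big)$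 and $N^{m+1}=\sum_{j\ge1}\Delta s\,p(s_j,X^{m+1})n^{m+1}_j$. DDM CFL condition: $\Delta t<\min\Big\{\big(\frac1{\Delta s}+\|p\|_\infty\big)^{-1},\ \frac{2}{\alpha_0\|\partial_Xp\|_\infty\|n^0\|_1}\Big\}$ (second term $+\infty$ if its denominator vanishes). Discrete total variation including the boundary value: $TV(n^m)=\sum_{j\ge0}|n^m_{j+1}-n^m_j|$ with $n^m_0=N^m$. *)

(* Defs.v *)
From Stdlib Require Import Reals Lra.
From Coquelicot Require Import Coquelicot.
Open Scope R_scope.

(* sup_{s>=0, X>=0} |p(s,X)|  (= ||p||_oo for the continuous representative) *)
Definition p_sup (p : R -> R -> R) : Rbar :=
  Lub_Rbar (fun r => exists s x, 0 <= s /\ 0 <= x /\ r = Rabs (p s x)).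

(* ||d_X p||_oo, taken as the best Lipschitz constant of p in the X variable
   (for a W^{1,oo} function on the convex domain R+ x R+ this coincides with
   ess sup |d_X p|). *)
Definition dXp_sup (p : R -> R -> R) : Rbar :=
  Lub_Rbar (fun r => exists s x y, 0 <= s /\ 0 <= x /\ 0 <= y /\ x <> y /\
                       r = Rabs (p s x - p s y) / Rabs (x - y)).

Definition W1inf (p : R -> R -> R) : Prop :=
  (exists M, forall s x, 0 <= s -> 0 <= x -> Rabs (p s x) <= M) /\
  (exists L, forall s x s' x', 0 <= s -> 0 <= x -> 0 <= s' -> 0 <= x' ->
      Rabs (p s x - p s' x') <= L * (Rabs (s - s') + Rabs (x - x'))).

Definition bounded_on_Rplus (a : R -> R) : Prop :=
  exists M, forall t, 0 <= t -> Rabs (a t) <= M.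

Definition BV_on_Rplus (a : R -> R) : Prop :=
  exists V, forall (u : nat -> R) (k : nat),
    0 <= u O -> (forall i, (i <= k)%nat -> u i <= u (S i)) ->
    sum_f_R0 (fun i => Rabs (a (u (S i)) - a (u i))) k <= V.

Definition sj (ds : R) (j : nat) : R := (INR j - 1/2) * ds.

Definition Pint (p : R -> R -> R) (ds x : R) (u : nat -> R) : R :=
  Series (fun k => ds * p (sj ds (S k)) x * u (S k)).

(* discrete total variation including the boundary value u 0, valued in
   [0, +oo] : sum_{j>=0} |u_{j+1} - u_j| *)
Definition TV (u : nat -> R) : Rbar :=
  Lim_seq (fun K => sum_f_R0 (fun j => Rabs (u (S j) - u j)) K).

(* The DDM upwind scheme, as a relation on (n, X): n m j for j >= 1 is n^m_j,
   and n m 0 is the boundary value N^m; X m is X^m. *)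
Definition DDM_scheme (p : R -> R -> R) (alpha : R -> R) (ds dt : R)
    (n0 : nat -> R) (n : nat -> nat -> R) (X : nat -> R) : Prop :=
  (forall j, (1 <= j)%nat -> n O j = n0 j) /\
  X O = 0 /\
  n O O = Pint p ds 0 (n O) /\
  (forall m j, (1 <= j)%nat ->
     n (S m) j = n m j - dt / ds * (n m j - n m (pred j))
                 - dt * p (sj ds j) (X m) * n m j) /\
  (forall m, 0 <= X (S m) /\
     X (S m) = dt / 2 * (alpha 0 * Pint p ds (X (S m)) (n (S m))
               + sum_f_R0 (fun k => n k O * alpha (INR (S m - k) * dt)) m)) /\
  (forall m, n (S m) O = Pint p ds (X (S m)) (n (S m))).

(* Main.v *)
Require Import Defs.
From Stdlib Require Import Reals Lra Lia.
From Coquelicot Require Import Coquelicot.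
Open Scope R_scope.

Lemma lim_series a (l : R) : is_lim_seq (sum_f_R0 a) l -> is_series a l.
Proof. intro H. apply is_series_Reals. apply is_lim_seq_Reals in H. exact H. Qed.

Lemma series_lim a (l : R) : is_series a l -> is_lim_seq (sum_f_R0 a) l.
Proof. intro H. apply is_lim_seq_Reals. apply is_series_Reals in H. exact H. Qed.

Lemma series_le a b la lb : (forall n, a n <= b n) -> is_series a la -> is_series b lb -> la <= lb.
Proof.
  intros H Ha Hb. apply series_lim in Ha. apply series_lim in Hb.
  assert (Hl := is_lim_seq_le _ _ _ _ (fun n => sum_Rle a b n (fun i _ => H i)) Ha Hb).
  exact Hl.
Qed.

Lemma series_partial_le a l K : (forall n, 0 <= a n) -> is_series a l -> sum_f_R0 a K <= l.
Proof.
  intros H Ha. apply series_lim in Ha. apply (is_lim_seq_incr_compare _ _ Ha).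
  intro n. rewrite tech5. specialize (H (S n)). lra.
Qed.

Lemma series_nonneg a l : (forall n, 0 <= a n) -> is_series a l -> 0 <= l.
Proof.
  intros H Ha. apply Rle_trans with (sum_f_R0 a 0). simpl. apply H.
  apply series_partial_le; auto.
Qed.

Lemma exs_le a b : (forall n, Rabs (a n) <= b n) -> ex_series b -> ex_series a.
Proof. intros H Hb. apply (ex_series_le a b); auto. Qed.

Lemma series_abs_bound a b l : (forall n, Rabs (a n) <= b n) -> is_series b l ->
  ex_series a /\ Rabs (Series a) <= l.
Proof.
  intros H Hb.
  assert (E : ex_series (fun n => Rabs (a n))).
  { apply exs_le with b. intro n; rewrite Rabs_Rabsolu; auto. exists l; auto. }
  split. apply ex_series_Rabs; auto.
  eapply Rle_trans. apply Series_Rabs; auto.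
  apply (series_le (fun n => Rabs (a n)) b); auto. apply Series_correct; auto.
Qed.

Lemma is_series_plusR a b la lb : is_series a la -> is_series b lb -> is_series (fun n => a n + b n) (la + lb).
Proof. intros. apply (is_series_plus a b la lb); auto. Qed.

Lemma is_series_scalR c a la : is_series a la -> is_series (fun n => c * a n) (c * la).
Proof. intros. apply (is_series_scal c a la); auto. Qed.

Lemma is_series_minusR a b la lb : is_series a la -> is_series b lb -> is_series (fun n => a n - b n) (la - lb).
Proof. intros. apply (is_series_minus a b la lb); auto. Qed.

Lemma is_series_decr1R a l : is_series (fun k => a (S k)) (l - a O) -> is_series a l.
Proof. intros. apply (is_series_decr_1 a l); auto. Qed.

Lemma sum_shift f K : sum_f_R0 f (S K) = f O + sum_f_R0 (fun i => f (S i)) K.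
Proof. induction K. simpl. lra. rewrite tech5, IHK, tech5. lra. Qed.

Lemma sum_rev g m : sum_f_R0 (fun k => g (m - k)%nat) m = sum_f_R0 g m.
Proof.
  induction m. simpl. reflexivity.
  rewrite sum_shift. simpl (S m - 0)%nat.
  rewrite (sum_eq _ (fun k => g (m - k)%nat)). rewrite IHm. rewrite tech5. lra.
  intros i _. f_equal.
Qed.

Definition Dseq (u : nat -> R) := fun j => Rabs (u (S j) - u j).

Lemma TV_series u (T : Rbar) : Lim_seq (sum_f_R0 (Dseq u)) = T -> is_finite T -> is_series (Dseq u) (real T).
Proof.
  intros HT Hf. apply lim_series.
  assert (Hinc : forall n, sum_f_R0 (Dseq u) n <= sum_f_R0 (Dseq u) (S n)).
  { intro n. rewrite tech5. unfold Dseq at 3. assert (0 <= Rabs (u (S (S n)) - u (S n))) by apply Rabs_pos. lra. }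
  destruct (ex_lim_seq_incr _ Hinc) as [l Hl].
  assert (Lim_seq (sum_f_R0 (Dseq u)) = l) by (apply is_lim_seq_unique; auto).
  assert (l = T) by congruence. subst l. unfold is_finite in Hf. rewrite Hf. rewrite <- H0. exact Hl.
Qed.

Lemma TV_bound u B : (forall K, sum_f_R0 (Dseq u) K <= B) ->
  is_finite (Lim_seq (sum_f_R0 (Dseq u))) /\ real (Lim_seq (sum_f_R0 (Dseq u))) <= B.
Proof.
  intro HB.
  assert (Hinc : forall n, sum_f_R0 (Dseq u) n <= sum_f_R0 (Dseq u) (S n)).
  { intro n. rewrite tech5. unfold Dseq at 3. assert (0 <= Rabs (u (S (S n)) - u (S n))) by apply Rabs_pos. lra. }
  destruct (ex_finite_lim_seq_incr _ B Hinc HB) as [l Hl].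
  rewrite (is_lim_seq_unique _ _ Hl). split. reflexivity.
  simpl. assert (H := is_lim_seq_le _ _ _ _ HB Hl (is_lim_seq_const B)). exact H.
Qed.

Lemma is_series_extR (a b : nat -> R) (l : R) : (forall n, a n = b n) -> is_series a l -> is_series b l.
Proof. intros. apply (is_series_ext a b l); auto. Qed.

Lemma abs2 c1 c2 x y : 0<=c1 -> 0<=c2 -> Rabs(c1*x + c2*y) <= c1*Rabs x + c2*Rabs y.
Proof.
  intros. eapply Rle_trans. apply Rabs_triang. rewrite !Rabs_mult, (Rabs_pos_eq c1), (Rabs_pos_eq c2); lra.
Qed.

Lemma abs3 c1 c2 d x y w : 0<=c1 -> 0<=c2 -> Rabs(c1*x + c2*y + d*w) <= c1*Rabs x + c2*Rabs y + Rabs d * Rabs w.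
Proof.
  intros. eapply Rle_trans. apply Rabs_triang. rewrite (Rabs_mult d).
  assert (H2 := abs2 c1 c2 x y H H0). lra.
Qed.

Lemma cfl_coef ds dt P q : 0 < ds -> 0 < dt -> dt*(1/ds + P) < 1 -> q <= P ->
  0 <= 1 - dt/ds - dt*q.
Proof.
  intros. assert (dt*q <= dt*P) by (apply Rmult_le_compat_l; lra).
  assert (dt*(1/ds+P) = dt/ds + dt*P) by (field; lra). lra.
Qed.

Lemma mass_step ds dt P (a b q : nat -> R) (M : R) :
 0 < ds -> 0 < dt -> dt*(1/ds + P) < 1 ->
 (forall j, (1<=j)%nat -> 0 <= q j <= P) ->
 (forall j, (1<=j)%nat -> a j = b j - dt/ds*(b j - b (pred j)) - dt * q j * b j) ->
 is_series (fun k => ds*Rabs (b (S k))) M ->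
 Rabs (b O) <= Series (fun k => ds * q (S k) * Rabs (b (S k))) ->
 exists M', is_series (fun k => ds*Rabs(a (S k))) M' /\ M' <= M.
Proof.
  intros Hds Hdt Hcfl Hq Hrec HM Hb0.
  assert (Hq' : forall k, 0 <= q (S k) <= P) by (intro; apply Hq; lia).
  assert (E3 : ex_series (fun k => ds * q (S k) * Rabs (b (S k)))).
  { apply exs_le with (fun k => P * (ds * Rabs (b (S k)))).
    intro k. specialize (Hq' k). assert (0 <= Rabs (b (S k))) by apply Rabs_pos.
    rewrite Rabs_pos_eq. 2: apply Rmult_le_pos; [apply Rmult_le_pos|]; lra.
    assert (q (S k) * (ds * Rabs (b (S k))) <= P * (ds * Rabs (b (S k)))).
    apply Rmult_le_compat_r. apply Rmult_le_pos; lra. lra. nra.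
    exists (P*M). apply is_series_scalR; auto. }
  set (s3 := Series (fun k => ds * q (S k) * Rabs (b (S k)))) in *.
  assert (H3 : is_series (fun k => ds * q (S k) * Rabs (b (S k))) s3) by (apply Series_correct; auto).
  assert (H2 : is_series (fun k => Rabs (b (S k))) (M/ds)).
  { apply is_series_extR with (fun k => /ds * (ds*Rabs (b (S k)))).
    intro; field; lra. unfold Rdiv; rewrite Rmult_comm. apply is_series_scalR; auto. }
  assert (H4 : is_series (fun k => Rabs (b k)) (M/ds + Rabs (b O))).
  { apply is_series_decr1R. replace (M / ds + Rabs (b 0%nat) - Rabs (b 0%nat)) with (M/ds) by ring. auto. }
  set (c := fun k => ds*Rabs (b (S k)) - dt*Rabs (b (S k)) - dt*(ds * q (S k) * Rabs (b (S k))) + dt*Rabs (b k)).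
  assert (Hc : is_series c (M - dt*(M/ds) - dt*s3 + dt*(M/ds + Rabs (b O)))).
  { unfold c. apply is_series_plusR. apply is_series_minusR. apply is_series_minusR. auto.
    apply is_series_scalR; auto. apply is_series_scalR; auto. apply is_series_scalR; auto. }
  assert (Hdom : forall k, Rabs (ds * Rabs (a (S k))) <= c k).
  { intro k. rewrite Rabs_pos_eq. 2: apply Rmult_le_pos; [lra|apply Rabs_pos].
    rewrite Hrec by lia. simpl pred.
    specialize (Hq' k).
    assert (Hco := cfl_coef ds dt P (q (S k)) Hds Hdt Hcfl (proj2 Hq')).
    replace (b (S k) - dt / ds * (b (S k) - b k) - dt * q (S k) * b (S k)) with
      ((1 - dt/ds - dt*q (S k)) * b (S k) + (dt/ds) * b k) by ring.
    assert (0 <= dt/ds) by (apply Rdiv_le_0_compat; lra).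
    assert (Ha := abs2 _ _ (b (S k)) (b k) Hco H).
    unfold c. apply Rle_trans with (ds * ((1 - dt / ds - dt * q (S k)) * Rabs (b (S k)) + dt / ds * Rabs (b k))).
    apply Rmult_le_compat_l; lra. right. field. lra. }
  assert (Ea : ex_series (fun k => ds * Rabs (a (S k)))).
  { apply exs_le with c; auto. exists (M - dt*(M/ds) - dt*s3 + dt*(M/ds + Rabs (b O))); auto. }
  exists (Series (fun k => ds * Rabs (a (S k)))). split. apply Series_correct; auto.
  eapply Rle_trans. apply (series_le (fun k => ds * Rabs (a (S k))) c). intro k. eapply Rle_trans. apply Rle_abs. apply Hdom.
  apply Series_correct; auto. exact Hc.
  assert (dt * Rabs (b O) <= dt * s3) by (apply Rmult_le_compat_l; lra). lra.
Qed.

Lemma tv_step ds dt P L (a b q : nat -> R) :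
 0 < ds -> 0 < dt -> dt*(1/ds + P) < 1 -> 0 <= L ->
 (forall j, (1<=j)%nat -> 0 <= q j <= P) ->
 (forall j, (1<=j)%nat -> Rabs (q (S j) - q j) <= L*ds) ->
 (forall j, (1<=j)%nat -> a j = b j - dt/ds*(b j - b (pred j)) - dt * q j * b j) ->
 forall K, sum_f_R0 (Dseq a) K <= sum_f_R0 (Dseq b) K - dt/ds * Dseq b K + Rabs (a O - b O)
    + dt*P*Rabs (b 1%nat) + dt*L*(sum_f_R0 (fun i => ds*Rabs (b i)) K - ds*Rabs (b O)).
Proof.
  intros Hds Hdt Hcfl HL Hq HqL Hrec.
  assert (Hlam : 0 <= dt/ds) by (apply Rdiv_le_0_compat; lra).
  induction K.
  - simpl. unfold Dseq. rewrite (Hrec 1%nat) by lia. simpl pred.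
    destruct (Hq 1%nat) as [Hq0 HqP]; auto.
    assert (Hco := cfl_coef ds dt P (q 1%nat) Hds Hdt Hcfl HqP).
    assert (H1 : 0 <= 1 - dt/ds) by (assert (0 <= dt * q 1%nat) by (apply Rmult_le_pos; lra); lra).
    replace (b 1%nat - dt / ds * (b 1%nat - b 0%nat) - dt * q 1%nat * b 1%nat - a 0%nat) with
      ((1 - dt/ds) * (b 1%nat - b 0%nat) + 1 * (b 0%nat - a 0%nat) + (- (dt * q 1%nat)) * b 1%nat) by ring.
    eapply Rle_trans. apply abs3; lra.
    rewrite Rabs_Ropp, (Rabs_pos_eq (dt * q 1%nat)) by (apply Rmult_le_pos; lra).
    rewrite (Rabs_minus_sym (b 0%nat)).
    assert (dt * q 1%nat * Rabs (b 1%nat) <= dt * P * Rabs (b 1%nat)).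
    { apply Rmult_le_compat_r. apply Rabs_pos. apply Rmult_le_compat_l; lra. }
    lra.
  - rewrite !tech5. unfold Dseq at 2 4. unfold Dseq in IHK.
    rewrite (Hrec (S (S K))) by lia. rewrite (Hrec (S K)) by lia. simpl pred.
    destruct (Hq (S (S K))) as [Hq0 HqP]; [lia|].
    assert (Hco := cfl_coef ds dt P (q (S (S K))) Hds Hdt Hcfl HqP).
    replace (b (S (S K)) - dt / ds * (b (S (S K)) - b (S K)) - dt * q (S (S K)) * b (S (S K)) -
      (b (S K) - dt / ds * (b (S K) - b K) - dt * q (S K) * b (S K))) with
      ((1 - dt/ds - dt*q (S (S K))) * (b (S (S K)) - b (S K)) + (dt/ds) * (b (S K) - b K)
        + (- (dt * (q (S (S K)) - q (S K)))) * b (S K)) by ring.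
    assert (Hab := abs3 (1 - dt/ds - dt*q (S (S K))) (dt/ds) (- (dt * (q (S (S K)) - q (S K))))
       (b (S (S K)) - b (S K)) (b (S K) - b K) (b (S K)) Hco Hlam).
    rewrite Rabs_Ropp, Rabs_mult, (Rabs_pos_eq dt) in Hab by lra.
    assert (dt * Rabs (q (S (S K)) - q (S K)) * Rabs (b (S K)) <= dt * (L*ds) * Rabs (b (S K))).
    { apply Rmult_le_compat_r. apply Rabs_pos. apply Rmult_le_compat_l. lra. apply HqL. lia. }
    assert (0 <= dt * q (S (S K)) * Rabs (b (S (S K)) - b (S K))).
    { apply Rmult_le_pos. apply Rmult_le_pos; lra. apply Rabs_pos. }
    unfold Dseq. unfold Dseq in IHK. lra.
Qed.

Lemma exs_pint ds P (q b : nat -> R) (M : R) : 0 < ds ->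
  (forall j, (1<=j)%nat -> Rabs (q j) <= P) ->
  is_series (fun k => ds*Rabs (b (S k))) M ->
  ex_series (fun k => ds * q (S k) * b (S k)) /\ Rabs (Series (fun k => ds * q (S k) * b (S k))) <= P*M.
Proof.
  intros Hds Hq HM. apply series_abs_bound with (fun k => P * (ds*Rabs (b (S k)))).
  intro k. rewrite !Rabs_mult, (Rabs_pos_eq ds) by lra.
  assert (Rabs (q (S k)) <= P) by (apply Hq; lia).
  assert (0 <= ds * Rabs (b (S k))) by (apply Rmult_le_pos; [lra|apply Rabs_pos]).
  nra. apply is_series_scalR; auto.
Qed.

Lemma N_diff ds dt P G (a b q q' : nat -> R) dX (M M' T : R) :
 0 < ds -> 0 < dt -> 0 <= dX ->
 (forall j, (1<=j)%nat -> 0 <= q j <= P) ->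
 (forall j, (1<=j)%nat -> Rabs (q' j) <= P) ->
 (forall j, (1<=j)%nat -> Rabs (q' j - q j) <= G * dX) ->
 (forall j, (1<=j)%nat -> a j = b j - dt/ds*(b j - b (pred j)) - dt * q j * b j) ->
 is_series (fun k => ds*Rabs (a (S k))) M' ->
 is_series (fun k => ds*Rabs (b (S k))) M ->
 is_series (Dseq b) T ->
 Rabs (Series (fun k => ds*q' (S k)*a (S k)) - Series (fun k => ds*q (S k)*b (S k)))
   <= G*dX*M' + P*dt*T + P*dt*P*M.
Proof.
  intros Hds Hdt HdX Hq Hq' Hqq Hrec HM' HM HT.
  assert (Hqa : forall j, (1<=j)%nat -> Rabs (q j) <= P).
  { intros j Hj. destruct (Hq j Hj). rewrite Rabs_pos_eq; lra. }
  destruct (exs_pint ds P q' a M' Hds Hq' HM') as [E1 _].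
  destruct (exs_pint ds P q b M Hds Hqa HM) as [E2 _].
  rewrite <- Series_minus by auto.
  apply series_abs_bound with
    (fun k => G*dX*(ds*Rabs (a (S k))) + P*dt*Dseq b k + P*dt*P*(ds*Rabs (b (S k)))).
  2: { apply is_series_plusR. apply is_series_plusR. apply is_series_scalR; auto.
       apply is_series_scalR; auto. apply is_series_scalR; auto. }
  intro k. assert (HA := Hrec (S k) ltac:(lia)). simpl pred in HA.
  set (x := b (S k)) in *. set (y := b k) in *. set (qq := q (S k)) in *. set (qq' := q' (S k)). set (A := a (S k)) in *.
  assert (H1 : Rabs (qq' - qq) <= G*dX) by (apply Hqq; lia).
  assert (H2 : 0 <= qq <= P) by (apply Hq; lia).
  replace (ds * qq' * A - ds * qq * x) with
    (ds * (qq' - qq) * A + (ds*qq) * (-(dt/ds) * (x - y) + (- (dt*qq)) * x)) by (rewrite HA; ring).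
  eapply Rle_trans. apply Rabs_triang.
  rewrite !Rabs_mult, (Rabs_pos_eq ds), (Rabs_pos_eq qq) by lra.
  assert (H3 : Rabs (- (dt / ds) * (x - y) + - (dt * qq) * x) <= dt/ds * Rabs (x - y) + dt*P*Rabs x).
  { eapply Rle_trans. apply Rabs_triang. rewrite !Rabs_mult, !Rabs_Ropp, (Rabs_pos_eq (dt/ds)), (Rabs_pos_eq (dt*qq)).
    assert (dt*qq*Rabs x <= dt*P*Rabs x). apply Rmult_le_compat_r. apply Rabs_pos. apply Rmult_le_compat_l; lra. lra.
    apply Rmult_le_pos; lra. apply Rdiv_le_0_compat; lra. }
  assert (H4 : ds * qq * Rabs (- (dt / ds) * (x - y) + - (dt * qq) * x) <= ds * P * (dt/ds * Rabs (x - y) + dt*P*Rabs x)).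
  { apply Rle_trans with (ds*qq*(dt/ds * Rabs (x - y) + dt*P*Rabs x)). apply Rmult_le_compat_l. apply Rmult_le_pos; lra. auto.
    apply Rmult_le_compat_r. assert (0 <= Rabs (x-y)) by apply Rabs_pos. assert (0<=Rabs x) by apply Rabs_pos.
    assert (0 <= dt/ds) by (apply Rdiv_le_0_compat; lra). assert (0 <= dt*P) by (apply Rmult_le_pos; lra). nra.
    apply Rmult_le_compat_l; lra. }
  assert (H5 : ds * Rabs (qq' - qq) * Rabs A <= G*dX*(ds*Rabs A)).
  { assert (0 <= Rabs A) by apply Rabs_pos. assert (0 <= ds * Rabs A) by nra.
    replace (G*dX*(ds*Rabs A)) with (ds * (G*dX) * Rabs A) by ring.
    apply Rmult_le_compat_r; auto. apply Rmult_le_compat_l; lra. }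
  unfold Dseq. fold x y.
  replace (ds * P * (dt / ds * Rabs (x - y) + dt * P * Rabs x)) with (P*dt*Rabs (x-y) + P*dt*P*(ds*Rabs x)) in H4 by (field; lra).
  lra.
Qed.

Lemma lub_fin (E : R -> Prop) M x0 : E x0 -> (forall r, E r -> r <= M) ->
  (forall r, E r -> r <= real (Lub_Rbar E)) /\ real (Lub_Rbar E) <= M.
Proof.
  intros H0 HM. destruct (Lub_Rbar_correct E) as [Hub Hlub].
  assert (Hle : Rbar_le (Lub_Rbar E) M) by (apply Hlub; intros r Hr; apply HM; auto).
  assert (Hge : Rbar_le x0 (Lub_Rbar E)) by (apply Hub; auto).
  destruct (Lub_Rbar E) as [l| |]; simpl in *; try contradiction.
  split; auto.
Qed.

Lemma p_facts p : W1inf p ->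
  (forall s x, 0 <= s -> 0 <= x -> Rabs (p s x) <= real (p_sup p)) /\ 0 <= real (p_sup p) /\
  (forall s x y, 0 <= s -> 0 <= x -> 0 <= y -> Rabs (p s x - p s y) <= real (dXp_sup p) * Rabs (x - y)) /\
  0 <= real (dXp_sup p) /\
  exists L, 0 <= L /\ forall s s' x, 0 <= s -> 0 <= s' -> 0 <= x -> Rabs (p s x - p s' x) <= L * Rabs (s - s').
Proof.
  intros [[M HM] [L HL]].
  assert (HLa : forall s x s' x', 0 <= s -> 0 <= x -> 0 <= s' -> 0 <= x' ->
      Rabs (p s x - p s' x') <= Rabs L * (Rabs (s - s') + Rabs (x - x'))).
  { intros. eapply Rle_trans. apply HL; auto. apply Rmult_le_compat_r.
    assert (0 <= Rabs (s-s')) by apply Rabs_pos. assert (0 <= Rabs (x-x')) by apply Rabs_pos. lra. apply Rle_abs. }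
  destruct (lub_fin (fun r => exists s x, 0 <= s /\ 0 <= x /\ r = Rabs (p s x)) M (Rabs (p 0 0)))
    as [P1 P2].
  { exists 0, 0. repeat split; lra. }
  { intros r (s & x & Hs & Hx & ->). auto. }
  destruct (lub_fin (fun r => exists s x y, 0 <= s /\ 0 <= x /\ 0 <= y /\ x <> y /\
                       r = Rabs (p s x - p s y) / Rabs (x - y)) (Rabs L) (Rabs (p 0 0 - p 0 1) / Rabs (0 - 1)))
    as [G1 G2].
  { exists 0, 0, 1. repeat split; lra. }
  { intros r (s & x & y & Hs & Hx & Hy & Hxy & ->).
    assert (0 < Rabs (x - y)) by (apply Rabs_pos_lt; lra).
    apply Rmult_le_reg_r with (Rabs (x-y)); auto. unfold Rdiv. rewrite Rmult_assoc, Rinv_l by lra.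
    rewrite Rmult_1_r. eapply Rle_trans. apply HLa; auto. replace (s - s) with 0 by ring. rewrite Rabs_R0. lra. }
  unfold p_sup, dXp_sup. split; [|split; [|split; [|split]]].
  - intros s x Hs Hx. apply P1. exists s, x. auto.
  - eapply Rle_trans. apply Rabs_pos. apply P1. exists 0, 0. repeat split; lra.
  - intros s x y Hs Hx Hy. destruct (Req_dec x y) as [->|Hxy].
    + unfold Rminus. rewrite !Rplus_opp_r, Rabs_R0. lra.
    + assert (0 < Rabs (x - y)) by (apply Rabs_pos_lt; lra).
      assert (Hr := G1 (Rabs (p s x - p s y) / Rabs (x - y)) ltac:(exists s, x, y; repeat split; auto)).
      apply Rmult_le_compat_r with (r := Rabs (x-y)) in Hr; [|lra].
      unfold Rdiv in Hr. rewrite Rmult_assoc, Rinv_l, Rmult_1_r in Hr by lra. lra.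
  - eapply Rle_trans. 2: apply G1. 2: exists 0, 0, 1; repeat split; lra.
    apply Rdiv_le_0_compat. apply Rabs_pos. apply Rabs_pos_lt. lra.
  - exists (Rabs L). split. apply Rabs_pos. intros s s' x Hs Hs' Hx.
    eapply Rle_trans. apply HLa; auto. replace (x - x) with 0 by ring. rewrite Rabs_R0. right; ring.
Qed.

Lemma sj_nonneg ds j : 0 < ds -> (1 <= j)%nat -> 0 <= sj ds j.
Proof. intros. unfold sj. apply Rmult_le_pos; [|lra]. apply le_INR in H0. simpl in H0. lra. Qed.

Lemma sj_S ds j : sj ds (S j) - sj ds j = ds.
Proof. unfold sj. rewrite S_INR. ring. Qed.

Lemma alpha_sum_bound (alpha : R -> R) (Nk : nat -> R) dt m c V :
  0 < dt -> 0 <= c -> (forall k, Rabs (Nk k) <= c) ->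
  (forall (u : nat -> R) (k : nat), 0 <= u O -> (forall i, (i <= k)%nat -> u i <= u (S i)) ->
    sum_f_R0 (fun i => Rabs (alpha (u (S i)) - alpha (u i))) k <= V) ->
  Rabs (sum_f_R0 (fun k => Nk k * alpha (INR (S (S m) - k) * dt)) m
        - sum_f_R0 (fun k => Nk k * alpha (INR (S m - k) * dt)) m) <= c * V.
Proof.
  intros Hdt Hc HN HV. rewrite <- minus_sum.
  eapply Rle_trans. apply sum_f_R0_triangle.
  apply Rle_trans with (sum_f_R0 (fun k => c * Rabs (alpha (INR (S (S m) - k) * dt) - alpha (INR (S m - k) * dt))) m).
  { apply sum_Rle. intros k _. rewrite <- Rmult_minus_distr_l, Rabs_mult.
    apply Rmult_le_compat_r. apply Rabs_pos. auto. }
  replace (sum_f_R0 (fun k => c * Rabs (alpha (INR (S (S m) - k) * dt) - alpha (INR (S m - k) * dt))) m)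
    with (c * sum_f_R0 (fun k => Rabs (alpha (INR (S (S m) - k) * dt) - alpha (INR (S m - k) * dt))) m).
  2: { rewrite scal_sum. apply sum_eq. intros; ring. }
  apply Rmult_le_compat_l; auto.
  set (g := fun i => Rabs (alpha (INR (S (S i)) * dt) - alpha (INR (S i) * dt))).
  rewrite (sum_eq _ (fun k => g (m - k)%nat)).
  2: { intros k Hk. unfold g. replace (S (S m) - k)%nat with (S (S (m - k))) by lia.
       replace (S m - k)%nat with (S (m - k)) by lia. reflexivity. }
  rewrite sum_rev. unfold g.
  apply (HV (fun i => INR (S i) * dt) m).
  - apply Rmult_le_pos; [apply pos_INR|lra].
  - intros i _. apply Rmult_le_compat_r. lra. rewrite (S_INR (S i)). lra.
Qed.

Theorem mainTheorem13 :
  forall (p : R -> R -> R) (alpha : R -> R),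
    W1inf p ->
    (forall s x, 0 <= s -> 0 <= x -> 0 <= p s x) ->
    (forall t, 0 <= t -> 0 <= alpha t) ->
    bounded_on_Rplus alpha ->
    BV_on_Rplus alpha ->
  forall N1 Ninf : R,
  exists tau0 C1 C2 : R, 0 < tau0 /\ 0 < C1 /\ 0 < C2 /\
    forall (ds dt : R) (n0 : nat -> R) (n : nat -> nat -> R) (X : nat -> R),
      0 < ds -> 0 < dt ->
      (forall j, (1 <= j)%nat -> 0 <= n0 j) ->
      ex_series (fun k => ds * Rabs (n0 (S k))) ->
      Series (fun k => ds * Rabs (n0 (S k))) = N1 ->
      Lub_Rbar (fun r => exists j, (1 <= j)%nat /\ r = Rabs (n0 j)) = Finite Ninf ->
      DDM_scheme p alpha ds dt n0 n X ->
      is_finite (TV (n O)) ->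
      dt <= tau0 ->
      dt * (1 / ds + real (p_sup p)) < 1 ->
      dt * (alpha 0 * real (dXp_sup p) * N1) < 2 ->
      forall m : nat,
        Rbar_le (TV (n m))
          (Finite (exp (C1 * (INR m * dt)) * real (TV (n O))
                   + C2 * (exp (C1 * (INR m * dt)) - 1))).
Proof.
  intros p alpha HW Hp Ha [B0 HB] [V0 HV] N1 Ninf.
  destruct (p_facts p HW) as (HP & HP0 & HG & HG0 & L & HL0 & HLs).
  set (P := real (p_sup p)) in *. set (G := real (dXp_sup p)) in *.
  set (A := alpha 0). assert (HA : 0 <= A) by (apply Ha; lra).
  set (B := Rabs B0). set (V := Rabs V0). set (N := Rabs N1).
  assert (HB0 : 0 <= B) by apply Rabs_pos. assert (HV0 : 0 <= V) by apply Rabs_pos.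
  assert (HN0 : 0 <= N) by apply Rabs_pos.
  assert (HBa : forall t, 0 <= t -> Rabs (alpha t) <= B).
  { intros t Ht. eapply Rle_trans. apply HB; auto. apply Rle_abs. }
  assert (HVa : forall (u : nat -> R) (k : nat), 0 <= u O -> (forall i, (i <= k)%nat -> u i <= u (S i)) ->
    sum_f_R0 (fun i => Rabs (alpha (u (S i)) - alpha (u i))) k <= V).
  { intros. eapply Rle_trans. apply HV; auto. apply Rle_abs. }
  set (K0 := P*N*(A+B+V)).
  assert (HK0 : 0 <= K0) by (unfold K0; apply Rmult_le_pos; [apply Rmult_le_pos|]; lra).
  set (C1 := G*N*A*P + 2*P + 1).
  assert (HC1 : 0 < C1).
  { unfold C1. assert (0 <= G*N*A*P) by (repeat apply Rmult_le_pos; lra). lra. }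
  set (C2' := G*N*A*P*P*N + G*N*K0 + 2*P*P*N + L*N + 1).
  assert (HC2' : 0 < C2').
  { unfold C2'. assert (0 <= G*N*A*P*P*N) by (repeat apply Rmult_le_pos; lra).
    assert (0 <= G*N*K0) by (repeat apply Rmult_le_pos; lra).
    assert (0 <= P*P*N) by (repeat apply Rmult_le_pos; lra).
    assert (0 <= L*N) by (repeat apply Rmult_le_pos; lra). lra. }
  assert (HAGN : 0 <= A*G*N) by (repeat apply Rmult_le_pos; lra).
  exists (1 / (1 + A*G*N)), C1, (C2'/C1).
  split. apply Rdiv_lt_0_compat; lra. split. auto. split. apply Rdiv_lt_0_compat; lra.
  intros ds dt n0 n X Hds Hdt Hn0 Hex HS Hsup (Hn0' & HX0 & HN00 & Hrec & HXeq & HNS) HTV0 Htau Hcfl1 Hcfl2.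
  assert (Hdt1 : dt <= 1).
  { eapply Rle_trans. apply Htau. apply Rmult_le_reg_l with (1 + A*G*N). lra.
    unfold Rdiv. rewrite Rmult_1_l, Rinv_r by lra. lra. }
  assert (HdtAGN : dt * (A*G*N) <= 1).
  { apply Rle_trans with (1 / (1 + A*G*N) * (A*G*N)). apply Rmult_le_compat_r; auto.
    unfold Rdiv. rewrite Rmult_1_l. apply Rmult_le_reg_l with (1 + A*G*N). lra.
    rewrite <- Rmult_assoc, Rinv_r by lra. lra. }
  assert (HXnn : forall m, 0 <= X m).
  { intros [|m]. rewrite HX0; lra. apply (HXeq m). }
  set (q := fun m j => p (sj ds j) (X m)).
  assert (Hq : forall m j, (1 <= j)%nat -> 0 <= q m j <= P).
  { intros m j Hj. unfold q. split. apply Hp. apply sj_nonneg; auto. auto.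
    eapply Rle_trans. apply Rle_abs. apply HP. apply sj_nonneg; auto. auto. }
  assert (Hqa : forall m j, (1 <= j)%nat -> Rabs (q m j) <= P).
  { intros m j Hj. destruct (Hq m j Hj). rewrite Rabs_pos_eq; lra. }
  assert (HqL : forall m j, (1 <= j)%nat -> Rabs (q m (S j) - q m j) <= L*ds).
  { intros m j Hj. unfold q. eapply Rle_trans. apply HLs. apply sj_nonneg; auto. apply sj_nonneg; auto.
    auto. rewrite sj_S, Rabs_pos_eq; lra. }
  assert (HqG : forall m m' j, (1 <= j)%nat -> Rabs (q m' j - q m j) <= G * Rabs (X m' - X m)).
  { intros m m' j Hj. unfold q. apply HG; auto. apply sj_nonneg; auto. }
  assert (HNp : forall m, n m O = Series (fun k => ds * q m (S k) * n m (S k))).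
  { intros [|m]. rewrite HN00. unfold Pint, q. rewrite HX0. reflexivity. rewrite HNS. reflexivity. }
  assert (Hr : forall m j, (1 <= j)%nat -> n (S m) j = n m j - dt/ds*(n m j - n m (pred j)) - dt * q m j * n m j).
  { intros. apply Hrec; auto. }
  assert (Hmass : forall m, exists M, is_series (fun k => ds*Rabs (n m (S k))) M /\ M <= N1).
  { induction m as [|m [M [HM HMN]]].
    - exists N1. split; [|lra]. rewrite <- HS.
      apply is_series_extR with (fun k => ds * Rabs (n0 (S k))).
      intro k. rewrite Hn0' by lia. reflexivity. apply Series_correct; auto.
    - destruct (mass_step ds dt P (n (S m)) (n m) (q m) M Hds Hdt Hcfl1 (Hq m) (Hr m) HM) as [M' [HM' HM'M]].
      + rewrite HNp.
        assert (E3 : ex_series (fun k => ds * q m (S k) * Rabs (n m (S k)))).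
        { apply exs_le with (fun k => P * (ds*Rabs (n m (S k)))).
          intro k. destruct (Hq m (S k)) as [Hq0 HqP]; [lia|].
          assert (0 <= Rabs (n m (S k))) by apply Rabs_pos.
          rewrite Rabs_pos_eq. 2: repeat apply Rmult_le_pos; lra.
          replace (P * (ds * Rabs (n m (S k)))) with (P * ds * Rabs (n m (S k))) by ring.
          apply Rmult_le_compat_r; auto. rewrite (Rmult_comm P). apply Rmult_le_compat_l; lra.
          exists (P*M). apply is_series_scalR; auto. }
        apply series_abs_bound with (fun k => ds * q m (S k) * Rabs (n m (S k))).
        intro k. destruct (Hq m (S k)) as [Hq0 HqP]; [lia|].
        rewrite !Rabs_mult, (Rabs_pos_eq ds), (Rabs_pos_eq (q m (S k))) by lra. lra.
        apply Series_correct; auto.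
      + exists M'. split; auto. lra. }
  assert (HMpos : forall m M, is_series (fun k => ds*Rabs (n m (S k))) M -> 0 <= M).
  { intros m M H. apply (series_nonneg _ _ (fun k => Rmult_le_pos _ _ (Rlt_le _ _ Hds) (Rabs_pos _)) H). }
  assert (HNb : forall m, Rabs (n m O) <= P * N).
  { intro m. destruct (Hmass m) as [M [HM HMN]]. rewrite HNp.
    destruct (exs_pint ds P (q m) (n m) M Hds (Hqa m) HM) as [_ H]. eapply Rle_trans. apply H.
    apply Rmult_le_compat_l; auto. unfold N. eapply Rle_trans. apply HMN. apply Rle_abs. }
  assert (HXd : forall m, Rabs (X (S m) - X m) <= dt/2 * (A * Rabs (n (S m) O - n m O) + K0)).
  { intros [|m].
    - destruct (HXeq O) as [_ HX1]. rewrite HX1, <- HNS, HX0. fold A. simpl sum_f_R0.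
      replace (1 * dt) with dt by ring.
      set (y := n 1%nat O) in *. set (z := n O O) in *.
      assert (Hz := HNb O). fold z in Hz. assert (Hal := HBa dt ltac:(lra)).
      rewrite Rminus_0_r, Rabs_mult, (Rabs_pos_eq (dt/2)) by lra.
      apply Rmult_le_compat_l. lra.
      replace (A*y + z*alpha dt) with (A*(y - z) + (A * z + z * alpha dt)) by ring.
      eapply Rle_trans. apply Rabs_triang. eapply Rle_trans. apply Rplus_le_compat_l. apply Rabs_triang.
      rewrite !Rabs_mult, (Rabs_pos_eq A) by lra.
      assert (A * Rabs z <= A * (P*N)) by (apply Rmult_le_compat_l; auto).
      assert (Rabs z * Rabs (alpha dt) <= P*N*B).
      { apply Rmult_le_compat; auto; apply Rabs_pos. }
      assert (0 <= P*N*V) by (repeat apply Rmult_le_pos; lra).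
      unfold K0. nra.
    - destruct (HXeq (S m)) as [_ HX2]. destruct (HXeq m) as [_ HX1].
      rewrite HX2, HX1, <- HNS, <- HNS. rewrite tech5. fold A.
      replace (S (S m) - S m)%nat with 1%nat by lia.
      set (S2 := sum_f_R0 (fun k => n k O * alpha (INR (S (S m) - k) * dt)) m).
      set (S1 := sum_f_R0 (fun k => n k O * alpha (INR (S m - k) * dt)) m).
      assert (Hsb : Rabs (S2 - S1) <= P*N*V).
      { apply alpha_sum_bound; auto. apply Rmult_le_pos; auto. }
      replace (dt / 2 * (A * n (S (S m)) O + (S2 + n (S m) O * alpha (INR 1 * dt))) -
               dt / 2 * (A * n (S m) O + S1)) with
        (dt/2 * (A * (n (S (S m)) O - n (S m) O) + (n (S m) O * alpha (INR 1 * dt) + (S2 - S1)))) by ring.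
      rewrite Rabs_mult, (Rabs_pos_eq (dt/2)) by lra. apply Rmult_le_compat_l. lra.
      eapply Rle_trans. apply Rabs_triang. eapply Rle_trans. apply Rplus_le_compat_l. apply Rabs_triang.
      rewrite !Rabs_mult, (Rabs_pos_eq A) by lra.
      assert (Rabs (n (S m) O) * Rabs (alpha (INR 1 * dt)) <= P*N*B).
      { apply Rmult_le_compat; auto; try apply Rabs_pos. apply HBa. simpl; lra. }
      assert (0 <= A * (P*N)) by (repeat apply Rmult_le_pos; lra).
      unfold K0. nra. }
  assert (HN1N : N1 <= N) by apply Rle_abs.
  assert (HT0 : 0 <= real (TV (n O))).
  { assert (H := TV_series (n O) (TV (n O)) eq_refl HTV0).
    exact (series_nonneg _ _ (fun j => Rabs_pos _) H). }
  set (T0 := real (TV (n O))) in *.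
  assert (Hmain : forall m, is_finite (TV (n m)) /\
     real (TV (n m)) <= exp (C1*(INR m*dt)) * T0 + C2'/C1 * (exp (C1*(INR m*dt)) - 1)).
  { induction m as [|m [Hfin Hbnd]].
    - split; auto. simpl INR. rewrite Rmult_0_l, Rmult_0_r, exp_0. fold T0. lra.
    - set (T := real (TV (n m))) in *.
      assert (HTs : is_series (Dseq (n m)) T) by (apply (TV_series (n m) (TV (n m)) eq_refl Hfin)).
      assert (HT : 0 <= T) by (exact (series_nonneg _ _ (fun j => Rabs_pos _) HTs)).
      destruct (Hmass m) as [M [HM HMN]]. destruct (Hmass (S m)) as [M' [HM' HM'N]].
      assert (HM0 := HMpos _ _ HM). assert (HM0' := HMpos _ _ HM').
      set (x := Rabs (X (S m) - X m)). set (y := Rabs (n (S m) O - n m O)).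
      assert (Hx0 : 0 <= x) by apply Rabs_pos.
      assert (Hy : y <= G*x*M' + P*dt*T + P*dt*P*M).
      { unfold y. rewrite (HNp (S m)), (HNp m).
        apply (N_diff ds dt P G (n (S m)) (n m) (q m) (q (S m)) x M M' T); auto.
        }
      assert (Hy2 : y <= G*N*x + P*dt*T + P*dt*P*N).
      { assert (G*x*M' <= G*x*N) by (apply Rmult_le_compat_l; [apply Rmult_le_pos|]; lra).
        assert (P*dt*P*M <= P*dt*P*N) by (apply Rmult_le_compat_l; [repeat apply Rmult_le_pos|]; lra).
        lra. }
      assert (Hx := HXd m). fold x y in Hx.
      assert (Hx2 : x <= dt*(A*P*(T+P*N) + K0)).
      { assert (H1 : dt*(A*y) <= dt*(A*(G*N*x)) + dt*(A*(P*dt*T + P*dt*P*N))).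
        { rewrite <- Rmult_plus_distr_l, <- Rmult_plus_distr_l. apply Rmult_le_compat_l. lra.
          apply Rmult_le_compat_l. lra. lra. }
        assert (H2 : dt*(A*(G*N*x)) <= x).
        { replace (dt*(A*(G*N*x))) with ((dt*(A*G*N))*x) by ring.
          rewrite <- (Rmult_1_l x) at 2. apply Rmult_le_compat_r; lra. }
        assert (H3 : dt*(A*(P*dt*T + P*dt*P*N)) <= dt*(A*P*(T+P*N))).
        { replace (dt*(A*(P*dt*T + P*dt*P*N))) with (dt*(A*P*(T+P*N))*dt) by ring.
          rewrite <- (Rmult_1_r (dt*(A*P*(T+P*N)))) at 2. apply Rmult_le_compat_l; [|lra].
          assert (0 <= P*N) by (apply Rmult_le_pos; lra).
          repeat apply Rmult_le_pos; lra. }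
        assert (H4 : x <= dt/2*(A*y) + dt/2*K0) by lra.
        lra. }
      assert (Hy3 : y <= dt*(G*N*A*P*T + G*N*A*P*P*N + G*N*K0 + P*T + P*P*N)).
      { assert (G*N*x <= G*N*(dt*(A*P*(T+P*N) + K0))).
        { apply Rmult_le_compat_l; auto. apply Rmult_le_pos; lra. }
        assert (P*dt*T + P*dt*P*N = dt*(P*T + P*P*N)) by ring.
        assert (G*N*(dt*(A*P*(T+P*N) + K0)) = dt*(G*N*A*P*T + G*N*A*P*P*N + G*N*K0)) by ring.
        lra. }
      assert (Hb1 : Rabs (n m 1%nat) <= P*N + T).
      { assert (Hd0 : Dseq (n m) O <= T).
        { apply (series_partial_le _ _ O (fun j => Rabs_pos _) HTs). }
        unfold Dseq in Hd0. assert (Hn := HNb m).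
        replace (n m 1%nat) with (n m O + (n m 1%nat - n m O)) by ring.
        eapply Rle_trans. apply Rabs_triang. lra. }
      assert (Hsum : forall K, sum_f_R0 (fun i => ds*Rabs (n m i)) K - ds*Rabs (n m O) <= N).
      { intros [|K]. simpl. lra. rewrite sum_shift.
        assert (sum_f_R0 (fun i => ds*Rabs (n m (S i))) K <= M).
        { apply (series_partial_le _ _ K (fun k => Rmult_le_pos _ _ (Rlt_le _ _ Hds) (Rabs_pos _)) HM). }
        lra. }
      assert (Hpart : forall K, sum_f_R0 (Dseq (n (S m))) K <= T + y + dt*P*(P*N+T) + dt*L*N).
      { intro K. assert (H := tv_step ds dt P L (n (S m)) (n m) (q m) Hds Hdt Hcfl1 HL0 (Hq m) (HqL m) (Hr m) K).
        assert (sum_f_R0 (Dseq (n m)) K <= T).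
        { apply (series_partial_le _ _ K (fun j => Rabs_pos _) HTs). }
        assert (0 <= dt/ds * Dseq (n m) K).
        { apply Rmult_le_pos. apply Rdiv_le_0_compat; lra. apply Rabs_pos. }
        assert (dt*P*Rabs (n m 1%nat) <= dt*P*(P*N+T)).
        { apply Rmult_le_compat_l; auto. apply Rmult_le_pos; lra. }
        assert (dt*L*(sum_f_R0 (fun i => ds*Rabs (n m i)) K - ds*Rabs (n m O)) <= dt*L*N).
        { apply Rmult_le_compat_l; auto. apply Rmult_le_pos; lra. }
        fold y in H. lra. }
      destruct (TV_bound (n (S m)) _ Hpart) as [Hf' Hb'].
      change (TV (n (S m))) with (Lim_seq (sum_f_R0 (Dseq (n (S m))))). split; auto.
      set (E := exp (C1 * (INR m * dt))) in *.
      assert (HE0 : 0 < E) by apply exp_pos.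
      assert (HE' : exp (C1 * (INR (S m) * dt)) = E * exp (C1*dt)).
      { unfold E. rewrite <- exp_plus. f_equal. rewrite S_INR. ring. }
      rewrite HE'.
      assert (Hexp : 1 + C1*dt <= exp (C1*dt)).
      { left. apply exp_ineq1. assert (0 < C1*dt) by (apply Rmult_lt_0_compat; lra). lra. }
      set (c2 := C2'/C1) in *.
      assert (Hc2 : 0 <= c2) by (apply Rlt_le, Rdiv_lt_0_compat; lra).
      assert (HC2eq : C2' = C1 * c2) by (unfold c2; field; lra).
      assert (Hstep : real (Lim_seq (sum_f_R0 (Dseq (n (S m))))) <= T*(1 + dt*C1) + dt*C2').
      { assert (dt*(G*N*A*P*T + G*N*A*P*P*N + G*N*K0 + P*T + P*P*N) + dt*P*(P*N+T) + dt*L*N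
                <= T*(dt*C1) + dt*C2').
        { unfold C1, C2'. assert (0 <= dt*T) by (apply Rmult_le_pos; lra). nra. }
        lra. }
      assert (H1 : T*(1+dt*C1) <= (E*T0 + c2*(E-1))*(1+dt*C1)).
      { apply Rmult_le_compat_r. assert (0 <= dt*C1) by (apply Rmult_le_pos; lra). lra. exact Hbnd. }
      assert (H2 : E*(1+C1*dt) <= E*exp (C1*dt)) by (apply Rmult_le_compat_l; lra).
      assert (H3 : T0*(E*(1+C1*dt)) <= T0*(E*exp (C1*dt))) by (apply Rmult_le_compat_l; lra).
      assert (H4 : c2*(E*(1+C1*dt)) <= c2*(E*exp (C1*dt))) by (apply Rmult_le_compat_l; lra).
      rewrite HC2eq in Hstep.
      assert (H5 : (E*T0 + c2*(E-1))*(1+dt*C1) + dt*(C1*c2) = T0*(E*(1+C1*dt)) + c2*(E*(1+C1*dt)) - c2) by ring.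
      lra. }
  intro m. destruct (Hmain m) as [Hf Hb]. unfold is_finite in Hf. rewrite <- Hf. exact Hb.
Qed.
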